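(* Let $w$ be a word over $\Omega$ of length $k$ and let $i \in I \setminus \{s\}$. Then $i + T(i) < k - s$.
   Context: Let $\Omega$ be a finite alphabet; a word of length $k$ is written $w = w_k w_{k-1}\dots w_1$. Autocorrelation: for $1 \le i \le k$, $b_i = 1$ if $w_j = w_{k-i+j}$ for all $j=1,\dots,i$, else $b_i=0$. $s = \max\{j \in\{1,\dots,k-1\}: b_j = 1\}$, or $s=0$ if no such $j$. For $1 \le i \le k-1$ with $b_i = 1$, let $[i] = \max\{ j \in \{1,\dots,k-1\} : b_j = 1 \text{ and } i = k - t(k-j) \text{ for some integer } 1 \le t \le \lfloor k/(k-j) \rfloor\}$, and $I = \{[i] : 1 \le i \le k-1,\ b_i = 1\}$ (its largest element is $s$ when $s>0$). For $i \in I$, $T(i) = \max\{ t > 0 : w_{k-i}w_{k-i-1}\dots w_{k-i-t+1} = w_{k-j}w_{k-j-1}\dots w_{k-j-t+1} \text{ for some } j \in I,\ j > i\}$, with $T(i) = 0$ if this set is empty. *)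

(* Defs.v *)
From mathcomp Require Import all_boot.
Set Implicit Arguments. Unset Strict Implicit. Unset Printing Implicit Defensive.

(* A word of length k over the alphabet Omega, w = w_k w_{k-1} ... w_1, is
   represented by a function w : nat -> Omega; the letter w_j is (w j) for
   1 <= j <= k.  Values of w outside 1..k are never used below. *)

Section Autocorr.
Variables (Omega : finType) (k : nat) (w : nat -> Omega).

Definition acorr (i : nat) : bool :=
  all (fun j => w j == w (k - i + j)) (iota 1 i).

Definition sper : nat := \max_(1 <= j < k | acorr j) j.

Definition acls (i : nat) : nat :=
  \max_(1 <= j < k | acorr j &&
        has (fun t => i == k - t * (k - j)) (iota 1 (k %/ (k - j)))) j.

Definition inI (i : nat) : bool :=
  has (fun i0 => acorr i0 && (acls i0 == i)) (iota 1 (k - 1)).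

(* the block w_{k-i} w_{k-i-1} ... w_{k-i-t+1} equals
   w_{k-j} w_{k-j-1} ... w_{k-j-t+1}  (with all indices >= 1, i.e. t <= k-j) *)
Definition blocks_match (i j t : nat) : bool :=
  (t <= k - j) && all (fun m => w (k - i - m) == w (k - j - m)) (iota 0 t).

Definition Tfun (i : nat) : nat :=
  \max_(1 <= t < k.+1 |
        has (fun j => inI j && (i < j) && blocks_match i j t) (iota 1 (k - 1))) t.

End Autocorr.

(* Main.v *)
Require Import Defs.
From mathcomp Require Import all_boot.
From mathcomp Require Import zify.

Set Implicit Arguments. Unset Strict Implicit. Unset Printing Implicit Defensive.

Section Aux.
Variables (Omega : finType) (w : nat -> Omega).

Definition per (a b q : nat) := forall m, a <= m -> m + q <= b -> w m = w (m + q).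

Lemma per_sub a b p q : per a b p -> per a b q -> p <= q -> a + p + q <= b + 1 ->
  per a b (q - p).
Proof.
move=> Pp Pq lepq hb m am mb.
case: (leqP (m + q) b) => h.
  rewrite (Pq m am h).
  have e : m + q = m + (q - p) + p by lia.
  rewrite e; symmetry; apply: Pp; lia.
have e1 : w (m - p) = w m.
  have e : m = m - p + p by lia.
  by rewrite {2}e; apply: Pp; lia.
have e2 : w (m - p) = w (m - p + q) by apply: Pq; lia.
have e : m + (q - p) = m - p + q by lia.
by rewrite e -e2 e1.
Qed.

Lemma FW n : forall a b p q, p + q <= n -> per a b p -> per a b q ->
  a + p + q <= b + 1 -> per a b (gcdn p q).
Proof.
elim: n => [|n IH] a b p q hn Pp Pq hb.
  have -> : p = 0 by lia. by rewrite gcd0n.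
case: (posnP p) => [->|pp]; first by rewrite gcd0n.
case: (posnP q) => [->|qp]; first by rewrite gcdn0.
case: (leqP p q) => h.
  have -> : gcdn p q = gcdn p (q - p) by rewrite -{1}(subnKC h) gcdnDl.
  apply: IH => //; try lia. exact: per_sub.
have -> : gcdn p q = gcdn (p - q) q.
  by rewrite gcdnC -{1}(subnKC (ltnW h)) gcdnDl gcdnC.
apply: IH => //; try lia. apply: per_sub => //; lia.
Qed.

Lemma per_ext1 b p g a : 0 < p -> per 1 b p -> per a.+1 b g -> 1 <= a ->
  a.+1 + p + g <= b + 1 -> per a b g.
Proof.
move=> p0 Pp Pg a1 hb m am mb.
case: (ltnP a m) => h; first by apply: Pg.
have -> : m = a by lia.
rewrite (Pp a) ?a1 //; last lia.
rewrite (Pp (a + g)); try lia.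
rewrite -addnA (addnC g p) addnA.
apply: Pg; lia.
Qed.

Lemma per_ext b p g a : 0 < p -> per 1 b p -> per a b g -> 1 <= a ->
  a + p + g <= b + 1 -> per 1 b g.
Proof.
move=> p0 Pp; elim: a => [|a IH] Pg a1 hb; first lia.
case: (posnP a) => [a0|ap]; first by rewrite a0 in Pg.
apply: IH; [exact: (per_ext1 p0 Pp Pg ap hb) | lia | lia].
Qed.

Variable k : nat.

Lemma acorr_per b : b <= k -> acorr k w b -> per 1 k (k - b).
Proof.
move=> bk /allP H m m1 mk.
have := H m; rewrite mem_iota => /(_ ltac:(lia)) /eqP ->.
congr (w _); lia.
Qed.

Lemma per_acorr b : b <= k -> per 1 k (k - b) -> acorr k w b.
Proof.
move=> bk P; apply/allP => m; rewrite mem_iota => hm.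
apply/eqP; rewrite (P m); try lia. congr (w _); lia.
Qed.

Lemma sper_max j : acorr k w j -> 1 <= j < k -> j <= sper k w.
Proof.
move=> aj hj; rewrite /sper.
apply: (@leq_bigmax_seq _ _ _ (fun j => j) (j)) => //.
by rewrite mem_index_iota.
Qed.


Lemma sper_prop : sper k w = 0 \/ (acorr k w (sper k w) /\ 1 <= sper k w < k).
Proof.
rewrite /sper big_seq_cond; elim/big_ind: _; first by left.
  by move=> x y Hx Hy; case: (leqP x y).
move=> j /andP[]; rewrite mem_index_iota => hj aj; right; split => //.
Qed.

Lemma sper_acorr : acorr k w (sper k w).
Proof.
case: sper_prop => [->|[] //]. by [].
Qed.

Lemma sper_lt : 0 < k -> sper k w < k.
Proof. move=> k0; case: sper_prop => [->|[_ /andP[]]] //. Qed.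

Lemma L3 a d : 0 < k -> 1 <= a -> per a k d -> a + (k - sper k w) + d <= k + 1 ->
  (k - sper k w) %| d.
Proof.
move=> k0 a1 Pd hb.
case: (posnP d) => [->|d0]; first exact: dvdn0.
have sk := sper_lt k0.
have Pp : per 1 k (k - sper k w) by apply: acorr_per; [lia| exact: sper_acorr].
have sa := sper_acorr.
move: Pp hb sa sk.
have := @sper_max.
move: (sper k w) => s smax Pp hb sa sk.
set p := k - s in Pp hb *.
have pdef : p = k - s by [].
clearbody p.
have Pg : per a k (gcdn p d).
  apply: (@FW (p + d)) => //; try lia.
  by move=> m am mk; apply: Pp => //; lia.
have gp : 0 < gcdn p d by rewrite gcdn_gt0; apply/orP; left; lia.
have gle : gcdn p d <= p by apply: dvdn_leq; [lia| apply: dvdn_gcdl].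
have gd : gcdn p d <= d by apply: dvdn_leq => //; apply: dvdn_gcdr.
have Pg1 : per 1 k (gcdn p d).
  apply: (per_ext (p := p) (a := a)) => //; lia.
case: (ltnP (gcdn p d) p) => h.
  have : k - gcdn p d <= s.
    apply: smax.
      apply: per_acorr; first lia.
      by have -> : k - (k - gcdn p d) = gcdn p d by lia.
    apply/andP; split; lia.
  move=> H; exfalso; lia.
have : gcdn p d = p by apply/eqP; rewrite eqn_leq gle h.
by move=> <-; apply: dvdn_gcdr.
Qed.

Lemma L2 i : 0 < k -> acorr k w i -> i < k -> ~~ ((k - sper k w) %| (k - i)) ->
  i < k - sper k w.
Proof.
move=> k0 ai ik nd; case: (ltnP i (k - sper k w)) => // h.
exfalso; move/negP: nd; apply; apply: (L3 (a := 1)) => //.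
  exact: acorr_per (ltnW ik) ai.
lia.
Qed.

Lemma L1 i : inI k w i -> i != sper k w ->
  [/\ acorr k w i, 1 <= i < k & ~~ ((k - sper k w) %| (k - i))].
Proof.
move=> /hasP[i0]; rewrite mem_iota => hi0 /andP[ai0 /eqP ei] ns.
have k0 : 0 < k by lia.
have ge : i0 <= acls k w i0.
  rewrite /acls.
  apply: (@leq_bigmax_seq _ _ _ (fun j => j) (i0)); first by rewrite mem_index_iota; lia.
  rewrite ai0 /=; apply/hasP; exists 1.
    rewrite mem_iota; apply/andP; split => //.
    have : 1 <= k %/ (k - i0) by rewrite leq_divRL; lia.
    lia.
  rewrite mul1n; apply/eqP; lia.
have : acls k w i0 = 0 \/ (acorr k w (acls k w i0) /\ 1 <= acls k w i0 < k /\
  has (fun t => i0 == k - t * (k - acls k w i0)) (iota 1 (k %/ (k - acls k w i0)))).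
  rewrite /acls big_seq_cond; elim/big_ind: _; first by left.
    by move=> x y Hx Hy; case: (leqP x y).
  move=> j /andP[]; rewrite mem_index_iota => hj /andP[aj hh]; right; split => //.
rewrite ei => -[i0'|[ai [hi /hasP[t]]]]; first lia.
rewrite mem_iota => ht /eqP e0.
split => //.
apply/negP => /dvdnP[c ec].
have sle : i <= sper k w by apply: sper_max.
have sk := sper_lt k0.
have : sper k w <= acls k w i0.
  rewrite /acls.
  apply: (@leq_bigmax_seq _ _ _ (fun j => j) (sper k w)); first by rewrite mem_index_iota; lia.
  rewrite sper_acorr /=; apply/hasP; exists (t * c).
    rewrite mem_iota; apply/andP; split.
      have : 0 < c by case: c ec => //; lia.
      move=> c0; rewrite muln_gt0 c0 andbT; lia.
    rewrite add1n ltnS leq_divRL; last lia.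
    have : t * (k - i) <= k.
      apply: leq_trans (leq_divM k (k - i)).
      rewrite leq_mul2r; apply/orP; right; lia.
    by rewrite ec mulnA.
  apply/eqP; rewrite e0 ec mulnA; lia.
rewrite ei => h; move/eqP: ns; apply; lia.

Qed.

End Aux.

Theorem proposition4p1 (Omega : finType) (k : nat) (w : nat -> Omega) (i : nat) :
  inI k w i -> i != sper k w -> i + Tfun k w i < k - sper k w.
Proof.
move=> Ii ns.
have [ai /andP[i1 ik] nd] := L1 Ii ns.
have k0 : 0 < k by lia.
have ip := L2 k0 ai ik nd.
rewrite /Tfun big_seq_cond; elim/big_ind: _; first by rewrite addn0.
  by move=> x y hx hy; case: (leqP x y).
move=> t /andP[]; rewrite mem_index_iota => ht /hasP[j]; rewrite mem_iota => hj.
move=> /andP[/andP[Ij ij] /andP[tj /allP bm]].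
case: (ltnP (i + t) (k - sper k w)) => // hge; exfalso.
have sk := sper_lt w k0.
have [aj jk] : acorr k w j /\ j < k.
  case: (eqVneq j (sper k w)) => [->|njs]; first by split => //; exact: (sper_acorr w).
  by have [aj /andP[_ ->] _] := L1 Ij njs.
have Pd : per w (k - j - t + 1) k (j - i).
  move=> m am mk.
  have Pi := acorr_per (ltnW ik) ai.
  have Pj := acorr_per (ltnW jk) aj.
  case: (ltnP (k - i) (m + (j - i))) => h.
    have e1 := Pi (m + j - k) ltac:(lia) ltac:(lia).
    have e2 := Pj (m + j - k) ltac:(lia) ltac:(lia).
    have -> : m + (j - i) = m + j - k + (k - i) by lia.
    rewrite -e1 e2; congr (w _); lia.
  have := bm (k - j - m); rewrite mem_iota => /(_ ltac:(lia)) /eqP.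
  have -> : k - i - (k - j - m) = m + (j - i) by lia.
  have -> : k - j - (k - j - m) = m by lia.
  by move=> ->.
have dv := L3 k0 (a := k - j - t + 1) ltac:(lia) Pd ltac:(lia).
case: (eqVneq j (sper k w)) => [ejs|njs].
  move/negP: nd; apply.
  have -> : k - i = (j - i) + (k - sper k w) by lia.
  by rewrite dvdn_addr // dvdnn.
have [_ _ ndj] := L1 Ij njs.
have jp := L2 k0 aj jk ndj.
have : 0 < j - i by lia.
move=> /dvdn_leq /(_ dv) H.
clear -H jp; lia.
Qed.
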